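(* Let $\mathscr{H}$ be a complex Hilbert space and let $N(\cdot)$ be a norm on $\mathbb{B}(\mathscr{H})$ which is an algebra norm ($N(XY)\leq N(X)N(Y)$ for all $X,Y$) and self-adjoint ($N(X^* )=N(X)$ for all $X$). Then for all self-adjoint $B,C\in\mathbb{B}(\mathscr{H})$, $$\frac18N(C^2+B^2)+\frac12\max\{N(B),N(C)\}\,|N(B+C)-N(B-C)|\leq w_{(N,e)}^2(B,C).$$
   Context: For $T\in\mathbb{B}(\mathscr{H})$, $\Re(T)=\frac12(T+T^* )$. For $B,C\in\mathbb{B}(\mathscr{H})$, $w_{(N,e)}(B,C)=\sup_{\lambda_1,\lambda_2\in\mathbb{C},\ |\lambda_1|^2+|\lambda_2|^2\leq 1}\sup_{\theta\in\mathbb{R}} N(\Re(e^{i\theta}(\lambda_1B+\lambda_2C)))$. *)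

(* Defs.v *)
From HB Require Import structures.
From mathcomp Require Import all_boot all_order all_algebra.
From mathcomp Require Import all_classical all_reals.
From mathcomp Require Import trigo.
From mathcomp Require Import complex.
From Stdlib Require Import ClassicalEpsilon.
Set Implicit Arguments. Unset Strict Implicit. Unset Printing Implicit Defensive.
Import Order.TTheory GRing.Theory Num.Theory.
Local Open Scope ring_scope.

Section Hilbert.
Variable R : realType.
Local Notation C := (complex R).
Variable H : lmodType C.
(* inner product: linear in the first argument, conjugate-linear in the second *)
Variable ip : H -> H -> C.

Definition cabs (z : C) : R := Num.sqrt (complex.Re z ^+ 2 + complex.Im z ^+ 2).
Definition cconj (z : C) : C := Complex (complex.Re z) (- complex.Im z).

Definition hnorm (x : H) : R := Num.sqrt (complex.Re (ip x x)).

Definition is_hilbert : Prop :=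
  [/\ (forall (a : C) (x y z : H), ip (a *: x + y) z = a * ip x z + ip y z),
      (forall x y : H, ip y x = cconj (ip x y)),
      (forall x : H, 0 <= ip x x),
      (forall x : H, ip x x = 0 -> x = 0) &
      (forall u : nat -> H,
         (forall e : R, 0 < e -> exists M : nat, forall m n : nat,
            (M <= m)%N -> (M <= n)%N -> hnorm (u m - u n) < e) ->
         exists l : H, forall e : R, 0 < e -> exists M : nat, forall n : nat,
            (M <= n)%N -> hnorm (u n - l) < e)].

(* operators on H are modelled as functions H -> H; B(H) = bounded linear ones *)
Definition is_bounded_op (T : H -> H) : Prop :=
  (forall (a : C) (x y : H), T (a *: x + y) = a *: T x + T y) /\
  exists M : R, forall x : H, hnorm (T x) <= M * hnorm x.

Definition opadd (T S : H -> H) : H -> H := fun x => T x + S x.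
Definition opopp (T : H -> H) : H -> H := fun x => - T x.
Definition opscale (a : C) (T : H -> H) : H -> H := fun x => a *: T x.
Definition opmul (T S : H -> H) : H -> H := fun x => T (S x).

Definition is_adjoint_of (T S : H -> H) : Prop :=
  forall x y : H, ip (T x) y = ip x (S y).

(* the adjoint T^* (exists and is unique for bounded T on a Hilbert space) *)
Definition adjoint (T : H -> H) : H -> H :=
  epsilon (inhabits T) (fun S => is_adjoint_of T S).

Definition is_selfadjoint (T : H -> H) : Prop := is_adjoint_of T T.

Definition opRe (T : H -> H) : H -> H :=
  opscale (2%:R^-1) (opadd T (adjoint T)).

Definition is_selfadj_algebra_norm (N : (H -> H) -> R) : Prop :=
  [/\ (forall X, is_bounded_op X -> 0 <= N X),
      (forall X, is_bounded_op X -> N X = 0 -> X = (fun _ => 0)),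
      (forall a X, is_bounded_op X -> N (opscale a X) = cabs a * N X),
      (forall X Y, is_bounded_op X -> is_bounded_op Y ->
                   N (opadd X Y) <= N X + N Y) &
      ((forall X Y, is_bounded_op X -> is_bounded_op Y ->
                   N (opmul X Y) <= N X * N Y) /\
      (forall X, is_bounded_op X -> N (adjoint X) = N X))].

Definition expi (t : R) : C := Complex (cos t) (sin t).

Definition wNe (N : (H -> H) -> R) (B C0 : H -> H) : R :=
  sup [set r : R | exists (l1 l2 : C) (t : R),
         cabs l1 ^+ 2 + cabs l2 ^+ 2 <= 1 /\
         r = N (opRe (opscale (expi t) (opadd (opscale l1 B) (opscale l2 C0))))].

End Hilbert.

(* Main.v *)
Require Import Defs.
From HB Require Import structures.
From mathcomp Require Import all_boot all_order all_algebra.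
From mathcomp Require Import all_classical all_reals.
From mathcomp Require Import trigo.
From mathcomp Require Import complex.
From mathcomp Require Import ring lra.
From Stdlib Require Import ClassicalEpsilon.
Set Implicit Arguments. Unset Strict Implicit.
Import Order.TTheory GRing.Theory Num.Theory.
Local Open Scope ring_scope.

Section S.
Variable R : realType.
Local Notation C := (complex R).
Variable H : lmodType C.
Variable ip : H -> H -> C.
Hypothesis hH : is_hilbert ip.

Lemma cconjE (z : C) : cconj z = conjc z.
Proof. by case: z. Qed.

Lemma ipDZl a x y z : ip (a *: x + y) z = a * ip x z + ip y z.
Proof. by case: hH. Qed.
Lemma ipsym x y : ip y x = conjc (ip x y).
Proof. by case: hH => _ h _ _ _; rewrite h cconjE. Qed.

Lemma ip0l z : ip 0 z = 0.
Proof.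
have := ipDZl 1 0 0 z; rewrite scaler0 addr0 mul1r.
by rewrite -{1}[ip 0 z]addr0 => /addrI <-.
Qed.
Lemma ipZl a x z : ip (a *: x) z = a * ip x z.
Proof. by have := ipDZl a x 0 z; rewrite addr0 ip0l addr0. Qed.
Lemma ipDl x y z : ip (x + y) z = ip x z + ip y z.
Proof. by have := ipDZl 1 x y z; rewrite scale1r mul1r. Qed.
Lemma ipNl x z : ip (- x) z = - ip x z.
Proof. by rewrite -scaleN1r ipZl mulN1r. Qed.
Lemma ipZr a x z : ip z (a *: x) = conjc a * ip z x.
Proof. by rewrite ipsym ipZl rmorphM /= -ipsym. Qed.
Lemma ipDr x y z : ip z (x + y) = ip z x + ip z y.
Proof. by rewrite ipsym ipDl rmorphD /= -!ipsym. Qed.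
Lemma ipNr x z : ip z (- x) = - ip z x.
Proof. by rewrite ipsym ipNl rmorphN /= -ipsym. Qed.

Lemma ipxx_real x : ip x x = Complex (complex.Re (ip x x)) 0.
Proof.
case: hH => _ _ h _ _; have := h x.
case: (ip x x) => a b; rewrite lecE /= => /andP[/eqP <- _]; done.
Qed.
Lemma q_ge0 x : 0 <= complex.Re (ip x x).
Proof.
case: hH => _ _ h _ _; have := h x.
by case: (ip x x) => a b; rewrite lecE /= => /andP[_ ->].
Qed.

Lemma ReD (u v : C) : complex.Re (u + v) = complex.Re u + complex.Re v.
Proof. by case: u; case: v. Qed.
Lemma ReN (u : C) : complex.Re (- u) = - complex.Re u.
Proof. by case: u. Qed.

Lemma Re2 (u : C) : complex.Re (2%:R * u) = 2%:R * complex.Re u.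
Proof. case: u => a b /=. ring. Qed.

Local Notation q x := (complex.Re (ip x x)).

Lemma q_scale a x : q (a *: x) = (complex.Re a ^+ 2 + complex.Im a ^+ 2) * q x.
Proof.
rewrite ipZl ipZr ipxx_real; case: a => r s /=.
set t := complex.Re _. rewrite /=. ring.
Qed.

Lemma q_add x y : q (x + y) <= 2%:R * q x + 2%:R * q y.
Proof.
have e : ip (x + y) (x + y) + ip (x - y) (x - y) = 2%:R * ip x x + 2%:R * ip y y.
  rewrite !ipDl !ipDr !ipNl !ipNr; ring.
have : q (x + y) + q (x - y) = 2%:R * q x + 2%:R * q y.
  by rewrite -ReD e ReD !Re2.
have := q_ge0 (x - y). lra.
Qed.

Lemma bnd_q (T : H -> H) :
  (exists M, forall x, hnorm ip (T x) <= M * hnorm ip x) <->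
  exists K, 0 <= K /\ forall x, q (T x) <= K * q x.
Proof.
split.
- move=> [M hM]; exists (M ^+ 2); split; first exact: sqr_ge0.
  move=> x; have h1 := hM x.
  have h0 : 0 <= hnorm ip (T x) by exact: sqrtr_ge0.
  have h2 : hnorm ip (T x) ^+ 2 <= (M * hnorm ip x) ^+ 2.
    by rewrite ler_sqr ?nnegrE //; apply: le_trans h1.
  by move: h2; rewrite exprMn /hnorm !sqr_sqrtr ?q_ge0.
- move=> [K [K0 hK]]; exists (Num.sqrt K) => x.
  rewrite /hnorm -sqrtrM // ler_sqrt //; last by apply: mulr_ge0 => //; exact: q_ge0.
Qed.
Local Notation bnd := (is_bounded_op ip).

Lemma bnd_add T S : bnd T -> bnd S -> bnd (opadd T S).
Proof.
move=> [lT /bnd_q [K1 [K10 h1]]] [lS /bnd_q [K2 [K20 h2]]]; split.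
  by move=> a x y; rewrite /opadd lT lS scalerDr addrACA.
apply/bnd_q; exists (2%:R * K1 + 2%:R * K2); split; first lra.
move=> x; rewrite /opadd; apply: le_trans (q_add _ _) _.
have := h1 x; have := h2 x; have := q_ge0 x. nra.
Qed.

Lemma bnd_scale a T : bnd T -> bnd (opscale a T).
Proof.
move=> [lT /bnd_q [K1 [K10 h1]]]; split.
  by move=> b x y; rewrite /opscale lT scalerDr !scalerA mulrC.
apply/bnd_q; exists ((complex.Re a ^+ 2 + complex.Im a ^+ 2) * K1); split.
  by apply: mulr_ge0 => //; apply: addr_ge0; apply: sqr_ge0.
move=> x; rewrite /opscale q_scale -mulrA; apply: ler_wpM2l; last exact: h1.
by apply: addr_ge0; apply: sqr_ge0.
Qed.

Lemma bnd_opp T : bnd T -> bnd (opopp T).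
Proof.
move=> hT; have := @bnd_scale (-1) _ hT => [[l b]]; split.
  by move=> a x y; have := l a x y; rewrite /opscale /opopp !scaleN1r.
by move: b => [M hM]; exists M => x; have := hM x; rewrite /opscale /opopp scaleN1r.
Qed.

Lemma bnd_mul T S : bnd T -> bnd S -> bnd (opmul T S).
Proof.
move=> [lT /bnd_q [K1 [K10 h1]]] [lS /bnd_q [K2 [K20 h2]]]; split.
  by move=> a x y; rewrite /opmul lS lT.
apply/bnd_q; exists (K1 * K2); split; first exact: mulr_ge0.
move=> x; rewrite /opmul; apply: le_trans (h1 _) _.
rewrite -mulrA; apply: ler_wpM2l => //.
Qed.

Lemma adjoint_eq T S : is_adjoint_of ip T S -> adjoint ip T = S.
Proof.
move=> hS; rewrite /adjoint.
have := epsilon_spec (inhabits T) (fun S => is_adjoint_of ip T S) (ex_intro _ S hS).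
set S' := epsilon _ _ => hS'.
apply: boolp.funext => y.
have hd : forall x, ip (S' y - S y) x = 0.
  move=> x; rewrite ipDl ipNl (ipsym x (S' y)) (ipsym x (S y)) -hS -hS' subrr //.
case: hH => _ _ _ hdef _; apply/eqP; rewrite -subr_eq0; apply/eqP/hdef; exact: hd.
Qed.
Local Notation sa := (is_selfadjoint ip).

Lemma sa_add T S : sa T -> sa S -> sa (opadd T S).
Proof. by move=> hT hS x y; rewrite /opadd ipDl ipDr hT hS. Qed.
Lemma sa_opp T : sa T -> sa (opopp T).
Proof. by move=> hT x y; rewrite /opopp ipNl ipNr hT. Qed.

Lemma adj_gen e l1 l2 T S : sa T -> sa S ->
  is_adjoint_of ip (opscale e (opadd (opscale l1 T) (opscale l2 S)))
    (opscale (conjc e) (opadd (opscale (conjc l1) T) (opscale (conjc l2) S))).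
Proof.
move=> hT hS x y; rewrite /opscale /opadd ipZl ipZr ipDl ipDr !ipZl !ipZr !conjcK.
by rewrite hT hS.
Qed.

Lemma half_add (v : H) : (2%:R^-1 : C) *: (v + v) = v.
Proof.
rewrite -mulr2n -scalerMnr scalerMnl -mulr_natr mulVf ?scale1r //.
by rewrite pnatr_eq0.
Qed.

Lemma opRe_real k Y : sa Y -> conjc k = k -> opRe ip (opscale k Y) = opscale k Y.
Proof.
move=> hY hk; have hadj : is_adjoint_of ip (opscale k Y) (opscale k Y).
  by move=> x y; rewrite /opscale ipZl ipZr hk hY.
rewrite /opRe (@adjoint_eq _ _ hadj); apply: boolp.funext => x.
by rewrite /opscale /opadd half_add.
Qed.

Lemma cabs_ge0 (z : C) : 0 <= cabs z.
Proof. exact: sqrtr_ge0. Qed.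
Lemma cabs_conj (z : C) : cabs (conjc z) = cabs z.
Proof. by case: z => a b; rewrite /cabs /= sqrrN. Qed.
Lemma cabs_expi (t : R) : cabs (expi t) = 1.
Proof. by rewrite /cabs /expi /= cos2Dsin2 sqrtr1. Qed.
Lemma cabs_real (a : R) : 0 <= a -> cabs (Complex a 0) = a.
Proof. by move=> a0; rewrite /cabs /= expr0n /= addr0 sqrtr_sqr ger0_norm. Qed.
Variable N : (H -> H) -> R.
Hypothesis hN : is_selfadj_algebra_norm ip N.

Lemma N_ge0 X : bnd X -> 0 <= N X.
Proof. by case: hN => h _ _ _ _; apply: h. Qed.
Lemma N_scale a X : bnd X -> N (opscale a X) = cabs a * N X.
Proof. by case: hN => _ _ h _ _; apply: h. Qed.
Lemma N_add X Y : bnd X -> bnd Y -> N (opadd X Y) <= N X + N Y.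
Proof. by case: hN => _ _ _ h _; apply: h. Qed.
Lemma N_mul X Y : bnd X -> bnd Y -> N (opmul X Y) <= N X * N Y.
Proof. by case: hN => _ _ _ _ [h _]; apply: h. Qed.

Lemma NX e l1 l2 T S : bnd T -> bnd S -> cabs e <= 1 -> cabs l1 <= 1 -> cabs l2 <= 1 ->
  N (opscale e (opadd (opscale l1 T) (opscale l2 S))) <= N T + N S.
Proof.
move=> bT bS he h1 h2.
have b1 := bnd_scale l1 bT; have b2 := bnd_scale l2 bS.
rewrite N_scale; last exact: bnd_add.
have := N_add b1 b2; rewrite !N_scale //.
have := N_ge0 bT; have := N_ge0 bS; have := cabs_ge0 e; have := cabs_ge0 l1;
have := cabs_ge0 l2; have := N_ge0 (bnd_add b1 b2).
move: (N (opadd _ _)) => n. nra.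
Qed.

Lemma N_gen e l1 l2 T S : bnd T -> bnd S -> sa T -> sa S ->
  cabs e <= 1 -> cabs l1 <= 1 -> cabs l2 <= 1 ->
  N (opRe ip (opscale e (opadd (opscale l1 T) (opscale l2 S)))) <=
  cabs (2%:R^-1) * (2%:R * (N T + N S)).
Proof.
move=> bT bS sT sS he h1 h2.
rewrite /opRe (@adjoint_eq _ _ (adj_gen e l1 l2 sT sS)).
have bX : forall e l1 l2, bnd (opscale e (opadd (opscale l1 T) (opscale l2 S))).
  by move=> *; apply/bnd_scale/bnd_add; apply: bnd_scale.
rewrite N_scale; last exact: bnd_add.
apply: ler_wpM2l; first exact: cabs_ge0.
apply: le_trans (N_add (bX _ _ _) (bX _ _ _)) _.
have := NX bT bS he h1 h2.
rewrite -cabs_conj in he; rewrite -cabs_conj in h1; rewrite -cabs_conj in h2.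
have := NX bT bS he h1 h2. lra.
Qed.
End S.

Lemma cabs_opp (R : realType) (z : complex R) : cabs (- z) = cabs z.
Proof. by case: z => a b; rewrite /cabs /= !sqrrN. Qed.

Theorem corollary2p15 (R : realType) (H : lmodType (complex R))
  (ip : H -> H -> complex R) (hH : is_hilbert ip)
  (N : (H -> H) -> R) (hN : is_selfadj_algebra_norm ip N)
  (B C : H -> H)
  (hB : is_bounded_op ip B) (hC : is_bounded_op ip C)
  (sB : is_selfadjoint ip B) (sC : is_selfadjoint ip C) :
  8%:R^-1 * N (opadd (opmul C C) (opmul B B))
  + 2%:R^-1 * Num.max (N B) (N C)
      * `| N (opadd B C) - N (opadd B (opopp C)) |
  <= wNe ip N B C ^+ 2.
Proof.
pose E : set R := fun r => exists (l1 l2 : complex R) (t : R),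
         cabs l1 ^+ 2 + cabs l2 ^+ 2 <= 1 /\
         r = N (opRe ip (opscale (expi t) (opadd (opscale l1 B) (opscale l2 C)))).
have c1 : cabs (Complex 1 0 : complex R) = 1 by rewrite cabs_real.
have c0 : cabs (Complex 0 0 : complex R) = 0 by rewrite cabs_real.
have e0 : expi (0 : R) = Complex 1 0 by rewrite /expi cos0 sin0.
have hsup : has_sup E.
  split.
    exists (N (opRe ip (opscale (expi 0) (opadd (opscale (Complex 1 0) B) (opscale (Complex 0 0) C))))).
    exists (Complex 1 0), (Complex 0 0), 0; split => //.
    by rewrite c1 c0 expr1n expr0n /= addr0.
  exists (cabs (2%:R^-1) * (2%:R * (N B + N C))) => r [l1 [l2 [t [hl ->]]]].
  have := cabs_ge0 l1; have := cabs_ge0 l2 => g2 g1.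
  apply: N_gen => //; first by rewrite cabs_expi.
    by nra.
  by nra.
have mem : forall l1 l2 k Y, cabs l1 ^+ 2 + cabs l2 ^+ 2 <= 1 ->
    opscale (expi 0) (opadd (opscale l1 B) (opscale l2 C)) = opscale k Y ->
    is_selfadjoint ip Y -> conjc k = k -> is_bounded_op ip Y ->
    cabs k * N Y <= wNe ip N B C.
  move=> l1 l2 k Y hl he sY hk bY.
  rewrite -(N_scale hN) // -(opRe_real hH sY hk) -he.
  apply: (sup_upper_bound hsup); exists l1, l2, 0; split => //.
pose k : complex R := Complex (7%:R / 10%:R) 0.
have k0 : (0 : R) <= 7%:R / 10%:R by apply: divr_ge0; apply: ler0n.
have ck : cabs k = 7%:R / 10%:R by rewrite cabs_real.
have ckk : conjc k = k by rewrite /k /= oppr0.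
have hl : cabs k ^+ 2 + cabs (- k) ^+ 2 <= 1.
  rewrite cabs_opp ck. lra.
have hBw : N B <= wNe ip N B C.
  have := mem (Complex 1 0) (Complex 0 0) (Complex 1 0) B.
  rewrite c1 mul1r; apply => //.
  - by rewrite c0 expr1n expr0n /= addr0.
  - apply: boolp.funext => x; rewrite e0 /opscale /opadd.
    by change (Complex 0 0) with (0 : complex R); change (Complex 1 0) with (1 : complex R); rewrite !scale1r scale0r addr0.
  - by rewrite /= oppr0.
have hCw : N C <= wNe ip N B C.
  have := mem (Complex 0 0) (Complex 1 0) (Complex 1 0) C.
  rewrite c1 mul1r; apply => //.
  - by rewrite c0 expr1n expr0n /= add0r.
  - apply: boolp.funext => x; rewrite e0 /opscale /opadd.
    by change (Complex 0 0) with (0 : complex R); change (Complex 1 0) with (1 : complex R); rewrite !scale1r scale0r add0r.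
  - by rewrite /= oppr0.
have bBC := bnd_add hH hB hC.
have bBmC := bnd_add hH hB (bnd_opp hH hC).
have ha : 7%:R / 10%:R * N (opadd B C) <= wNe ip N B C.
  rewrite -ck; apply: (mem k k) => //.
  - by move: hl; rewrite cabs_opp.
  - apply: boolp.funext => x; rewrite e0 /opscale /opadd.
    by change (Complex 1 0) with (1 : complex R); rewrite scale1r scalerDr.
  - exact: sa_add.
have hd : 7%:R / 10%:R * N (opadd B (opopp C)) <= wNe ip N B C.
  rewrite -ck; apply: (mem k (- k)) => //.
  - apply: boolp.funext => x; rewrite e0 /opscale /opadd /opopp.
    by change (Complex 1 0) with (1 : complex R); rewrite scale1r scalerDr scaleNr scalerN.
  - by apply: sa_add => //; apply: sa_opp.
have bCC := bnd_mul hH hC hC; have bBB := bnd_mul hH hB hB.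
have hs : N (opadd (opmul C C) (opmul B B)) <= N C * N C + N B * N B.
  apply: le_trans (N_add hN bCC bBB) _.
  by apply: lerD; apply: (N_mul hN).
have nB := N_ge0 hN hB; have nC := N_ge0 hN hC.
have nBC := N_ge0 hN bBC; have nBmC := N_ge0 hN bBmC.
move: hs hBw hCw ha hd nB nC nBC nBmC.
set w := wNe ip N B C; set s := N (opadd _ _); set b := N B; set c := N C.
set a := N (opadd B C); set d := N (opadd B _) => hs hBw hCw ha hd nB nC nBC nBmC.
have hm : Num.max b c <= w by rewrite ge_max hBw hCw.
have hm0 : 0 <= Num.max b c by rewrite le_max nB.
have ht : `|a - d| <= 10%:R / 7%:R * w.
  rewrite ler_norml; apply/andP; split; lra.
have ht0 : 0 <= `|a - d| by [].
move: hm hm0 ht ht0; set m := Num.max b c; set t := `|a - d| => hm hm0 ht ht0.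
have hmt : m * t <= w * (10%:R / 7%:R * w).
  by apply: ler_pM.
nra.
Qed.
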